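(* Let $V$ be a vertex algebra of countable dimension over $\mathbb{C}$ and let $W$ be an irreducible $L_r(V)$-module. Then $W$ is isomorphic as an $L_r(V)$-module to $U_{\mathbf{a}}$ for some irreducible $V$-module $U$ and some $\mathbf{a}\in(\mathbb{C}^\times)^r$.
   Context: Let $L_r=\mathbb{C}[t_1^{\pm1},\dots,t_r^{\pm1}]$, with $\mathbf{t}^{\mathbf{m}}=t_1^{m_1}\cdots t_r^{m_r}$; as a commutative associative algebra with identity it is a vertex algebra with $Y(a,x)b=ab$ and vacuum $1$. For a vertex algebra $V$, $L_r(V)=V\otimes L_r$ denotes the tensor product vertex algebra. For a $V$-module $(U,Y_U)$ and $\mathbf{a}=(a_1,\dots,a_r)\in(\mathbb{C}^\times)^r$, $U_{\mathbf{a}}$ denotes the $L_r(V)$-module with underlying space $U$ and vertex operators $\widehat{Y}(v\otimes\mathbf{t}^{\mathbf{m}},x)=\mathbf{a}^{\mathbf{m}}Y_U(v,x)$ for $v\in V,\mathbf{m}\in\mathbb{Z}^r$, where $\mathbf{a}^{\mathbf{m}}=a_1^{m_1}\cdots a_r^{m_r}$. *)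

(* Defs.v *)
From HB Require Import structures.
From mathcomp Require Import all_boot all_order all_algebra.
From mathcomp Require Import finmap.
From mathcomp Require Import complex.
From mathcomp Require Import Rstruct.
From mathcomp.multinomials Require Import monalg.
Set Implicit Arguments. Unset Strict Implicit. Unset Printing Implicit Defensive.
Import Order.TTheory GRing.Theory Num.Theory.
Local Open Scope ring_scope.

Definition CC : numClosedFieldType := complex Rdefinitions.R.

(** Vertex operators are encoded by their modes:  Y(u,x)w = sum_n u_n w x^{-n-1},
    written  [mode u n w].  The Jacobi identity is stated in its equivalent
    component form (Borcherds identity); all sums over i >= 0 are finite by
    truncation, so we require equality of partial sums for all large bounds. *)
Section VA.
Variable F : fieldType.

Definition binz (m : int) (i : nat) : F :=
  (\prod_(j < i) ((m - (j : nat)%:Z)%:~R : F)) / (i`!)%:R.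

Record VAdata := { va_space : lmodType F;
                   va_mode : va_space -> int -> va_space -> va_space;
                   va_vac : va_space }.
Arguments va_mode : clear implicits.
Arguments va_vac : clear implicits.

Definition is_module (A : VAdata) (W : lmodType F)
    (YW : va_space A -> int -> W -> W) : Prop :=
  [/\ (forall (c : F) u v n w, YW (c *: u + v) n w = c *: YW u n w + YW v n w),
      (forall u n (c : F) w w', YW u n (c *: w + w') = c *: YW u n w + YW u n w'),
      (forall u w, exists N : int, forall n, N <= n -> YW u n w = 0),
      (forall n w, YW (va_vac A) n w = if n == -1 then w else 0) &
      (forall u v w (m n l : int), exists N : nat, forall K : nat, (N <= K)%N ->
         \sum_(i < K) binz m i *: YW (va_mode A u (l + (i : nat)%:Z) v)
                                    (m + n - (i : nat)%:Z) w
         = \sum_(i < K) ((-1) ^+ i * binz l i) *: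
              (YW u (m + l - (i : nat)%:Z) (YW v (n + (i : nat)%:Z) w)
               - ((-1) ^ l) *: YW v (n + l - (i : nat)%:Z) (YW u (m + (i : nat)%:Z) w)))].

Definition is_vertex_algebra (A : VAdata) : Prop :=
  is_module (va_mode A) /\
  (forall u, va_mode A u (-1) (va_vac A) = u /\
             forall n : int, 0 <= n -> va_mode A u n (va_vac A) = 0).

Definition is_submodule (A : VAdata) (W : lmodType F)
    (YW : va_space A -> int -> W -> W) (S : W -> Prop) : Prop :=
  [/\ S 0, (forall (c : F) x y, S x -> S y -> S (c *: x + y)) &
      (forall u n w, S w -> S (YW u n w))].

Definition is_irreducible (A : VAdata) (W : lmodType F)
    (YW : va_space A -> int -> W -> W) : Prop :=
  is_module YW /\ (exists w : W, w <> 0) /\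
  forall S : W -> Prop, is_submodule YW S ->
    (forall w, S w -> w = 0) \/ (forall w, S w).

Definition countable_dim (V : lmodType F) : Prop :=
  exists e : nat -> V, forall v : V,
    exists (n : nat) (c : nat -> F), v = \sum_(i < n) c i *: e i.

Definition module_iso (A : VAdata) (W U : lmodType F)
    (YW : va_space A -> int -> W -> W) (YU : va_space A -> int -> U -> U) : Prop :=
  exists phi : W -> U,
    [/\ bijective phi,
        (forall (c : F) x y, phi (c *: x + y) = c *: phi x + phi y) &
        (forall u n w, phi (YW u n w) = YU u n (phi w))].

(** * The tensor product  V (x) L_r,  L_r = F[t_1^{+-1},...,t_r^{+-1}].
    It is modelled as finitely supported functions Z^r -> V (the element
    sum_m v_m (x) t^m), i.e. the free module {malg V[Z^r]}. *)
Section Tensor.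
Variables (M : choiceType) (V : lmodType F).

Definition tensL := malg M V.
HB.instance Definition _ := GRing.Zmodule.on tensL.

Definition tscale (c : F) (g : tensL) : tensL :=
  \sum_(k <- msupp g) << c *: g@_k *g k >>.

Lemma tscaleE c g k : (tscale c g)@_k = c *: g@_k.
Proof.
rewrite /tscale raddf_sum /=.
case: (msuppP g k) => Hk.
  rewrite (bigD1_seq k) //= ?msupp_uniq ?fset_uniq //= mcoeffUU big1 ?addr0 //.
  by move=> i /negPf ik; rewrite mcoeffU ik.
rewrite big1 ?scaler0 // => i _; rewrite mcoeffU.
by case: eqP => // ik; rewrite -ik in Hk *; rewrite mcoeff_outdom ?scaler0.
Qed.

Lemma tscaleA c1 c2 g : tscale c1 (tscale c2 g) = tscale (c1 * c2) g.
Proof. by apply/malgP=> x; rewrite !tscaleE scalerA. Qed.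
Lemma tscale1 g : tscale 1 g = g.
Proof. by apply/malgP=> k; rewrite !tscaleE scale1r. Qed.
Lemma tscaleDr c g1 g2 : tscale c (g1 + g2) = tscale c g1 + tscale c g2.
Proof. by apply/malgP=> k; rewrite !(mcoeffD, tscaleE) scalerDr. Qed.
Lemma tscaleDl g c1 c2 : tscale (c1 + c2) g = tscale c1 g + tscale c2 g.
Proof. by apply/malgP=> x; rewrite !(mcoeffD, tscaleE) scalerDl. Qed.

HB.instance Definition _ := GRing.Zmodule_isLmodule.Build F tensL
  tscaleA tscale1 tscaleDr tscaleDl.
End Tensor.

(** The tensor product vertex algebra  L_r(V) = V (x) L_r, where L_r carries
    Y(a,x)b = ab, vacuum 1:  (v (x) t^m)_n (w (x) t^k) = v_n w (x) t^(m+k). *)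
Definition Lr_mode (r : nat) (A : VAdata) (f : tensL 'rV[int]_r (va_space A))
    (n : int) (g : tensL 'rV[int]_r (va_space A)) : tensL 'rV[int]_r (va_space A) :=
  \sum_(k <- msupp f) \sum_(k' <- msupp g)
     << va_mode A (f@_k) n (g@_k') *g (k + k') >>.

Definition LrV (r : nat) (A : VAdata) : VAdata :=
  {| va_space := tensL 'rV[int]_r (va_space A);
     va_mode := @Lr_mode r A;
     va_vac := << va_vac A *g 0 >> |}.

Definition monoz (r : nat) (a : 'rV[F]_r) (m : 'rV[int]_r) : F :=
  \prod_(i < r) (a 0 i) ^ (m 0 i).

Definition Ua_mode (r : nat) (A : VAdata) (U : lmodType F)
    (YU : va_space A -> int -> U -> U) (a : 'rV[F]_r)
    (f : va_space (LrV r A)) (n : int) (u : U) : U :=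
  \sum_(k <- msupp (f : tensL _ _)) monoz a k *: YU (f@_k) n u.

End VA.

(* Main.v *)
Require Import Defs.
From HB Require Import structures.
From mathcomp Require Import all_boot all_order all_algebra all_field.
From mathcomp Require Import complex finmap.
From mathcomp.multinomials Require Import monalg.
From mathcomp Require Import boolp classical_sets functions cardinality.
From mathcomp Require Import Rstruct zify.
From Stdlib Require Import Reals.Runcountable FinFun.
Set Implicit Arguments. Unset Strict Implicit. Unset Printing Implicit Defensive.
Local Open Scope ring_scope.
Import Order.TTheory GRing.Theory Num.Theory.

Definition RR := Rdefinitions.R.
HB.instance Definition _ := Choice.on RR.
HB.instance Definition _ := isPointed.Build RR 0.

Lemma no_inj_R (g : RR -> nat) : ~ injective g.
Proof.
move=> ginj.
have c1 : ([set: RR] #<= [set: nat]%classic)%card.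
  apply/countable_injP; exists g => x y _ _; exact: ginj.
have c2 : ([set: nat] #<= [set: RR])%card.
  apply/pcard_injP; exists (fun n : nat => n%:R : RR).
  by move=> x y _ _ /eqP; rewrite eqr_nat => /eqP.
have : ([set: nat] #= [set: RR])%card by rewrite card_eq_le c1 c2.
move=> /card_set_bijP[f]; rewrite setTT_bijective => -[h fK hK].
apply: (R_uncountable f); exists h; split; [exact: fK | exact: hK].
Qed.

Lemma pigeon_CC (N : CC -> nat) : exists (M : nat) (s : seq CC),
  [/\ uniq s, (M < size s)%N & forall c, c \in s -> N c = M].
Proof.
apply: contrapT => H.
have fin : forall M, finite_set [set c : CC | N c = M].
  move=> M; apply: contrapT => /(infinite_set_fset M.+1)[B BS Bsz].
  apply: H; exists M, (finmap.enum_fset B); split; first exact: finmap.fset_uniq.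
    by [].
  by move=> c cB; apply: BS.
have : countable [set: CC]%classic.
  have -> : [set: CC]%classic = (\bigcup_(M in [set: nat]) [set c : CC | N c = M])%classic.
    by apply/seteqP; split => c //= _; exists (N c).
  apply: bigcup_countable => // M _; exact: finite_set_countable.
move=> /countable_injP[f finj].
have := @no_inj_R (fun x : RR => f (real_complex Rdefinitions.R x : CC)); apply.
move=> x y /finj; rewrite !inE => /(_ I I) [].
done.
Qed.

Lemma dep_rel (F : fieldType) (W : lmodType F) (M n : nat) (e : nat -> W)
  (a : 'I_n -> nat -> F) (v : 'I_n -> W) : (M < n)%N ->
  (forall j, v j = \sum_(i < M) a j i *: e i) ->
  exists l : 'I_n -> F, (exists j, l j != 0) /\ \sum_j l j *: v j = 0.
Proof.
move=> ltMn hv.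
pose A : 'M[F]_(n, M) := \matrix_(j, i) a j i.
pose K := kermx A.
have : K != 0.
  rewrite -mxrank_eq0 mxrank_ker subn_eq0 -ltnNge.
  exact: leq_ltn_trans (rank_leq_col A) ltMn.
move=> /eqP Kn0.
have [k [i Hki]] : exists k i, K k i != 0.
  apply: contrapT => hn; apply: Kn0; apply/matrixP => k i.
  rewrite [in RHS]mxE; apply/eqP; apply: contrapT => h; apply: hn; exists k, i; apply/negP; exact: h.
exists (fun j => K k j); split; first by exists i.
have KA : forall i0 : 'I_M, \sum_j K k j * a j i0 = 0.
  move=> i0; transitivity ((K *m A) k i0); last by rewrite mulmx_ker mxE.
  rewrite [in RHS]mxE; apply: eq_bigr => j _; by rewrite [A j i0]mxE.
under eq_bigr => j _ do rewrite hv scaler_sumr.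
rewrite exchange_big /= big1 // => i0 _.
under eq_bigr => j _ do rewrite scalerA.
by rewrite -scaler_suml KA scale0r.
Qed.

Section LinFacts.
Variables (W W' : lmodType CC) (T : W -> W').
Hypothesis Tlin : forall (c : CC) x y, T (c *: x + y) = c *: T x + T y.

Lemma T0 : T 0 = 0.
Proof. by have := Tlin (-1) 0 0; rewrite scaler0 add0r scaleN1r addNr. Qed.
Lemma TD (x y : W) : T (x + y) = T x + T y.
Proof. by rewrite -[x]scale1r Tlin !scale1r. Qed.
Lemma TZ (c : CC) (x : W) : T (c *: x) = c *: T x.
Proof. by rewrite -[c *: x]addr0 Tlin T0 addr0. Qed.
Lemma TN (x : W) : T (- x) = - T x.
Proof. by rewrite -scaleN1r TZ scaleN1r. Qed.
Lemma Tsum (I : Type) (r : seq I) (P : pred I) (F : I -> W) :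
  T (\sum_(i <- r | P i) F i) = \sum_(i <- r | P i) T (F i).
Proof. exact: (big_morph T TD T0). Qed.
End LinFacts.

Section OpPoly.
Variables (W : lmodType CC) (T : W -> W).
Hypothesis Tlin : forall (c : CC) x y, T (c *: x + y) = c *: T x + T y.

Definition opE (p : {poly CC}) (w : W) : W :=
  \sum_(i < size p) p`_i *: iter i T w.

Lemma opE_bound (p : {poly CC}) (w : W) n : (size p <= n)%N ->
  opE p w = \sum_(i < n) p`_i *: iter i T w.
Proof.
move=> hn; rewrite /opE (big_ord_widen _ (fun i => p`_i *: iter i T w) hn).
rewrite [RHS](bigID (fun i : 'I_n => (i < size p)%N)) /= [X in _ = _ + X]big1 ?addr0 //.
by move=> i; rewrite -leqNgt => hi; rewrite nth_default // scale0r.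
Qed.

Lemma opED (p q : {poly CC}) (w : W) : opE (p + q) w = opE p w + opE q w.
Proof.
rewrite (@opE_bound _ _ (maxn (size p) (size q))) ?size_polyD //.
rewrite (@opE_bound p _ (maxn (size p) (size q))) ?leq_maxl //.
rewrite (@opE_bound q _ (maxn (size p) (size q))) ?leq_maxr //.
by rewrite -big_split; apply: eq_bigr => i _; rewrite coefD scalerDl.
Qed.

Lemma opEZ c (p : {poly CC}) (w : W) : opE (c *: p) w = c *: opE p w.
Proof.
rewrite (@opE_bound _ _ (size p)) ?size_scale_leq // /opE scaler_sumr.
by apply: eq_bigr => i _; rewrite coefZ scalerA.
Qed.

Lemma opE0 (w : W) : opE 0 w = 0.
Proof. by rewrite /opE size_poly0 big_ord0. Qed.

Lemma opEN (p : {poly CC}) (w : W) : opE (- p) w = - opE p w.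
Proof. by rewrite -[- p]scaleN1r opEZ scaleN1r. Qed.

Lemma opEC (c : CC) (w : W) : opE c%:P w = c *: w.
Proof.
rewrite (@opE_bound _ _ 1) ?size_polyC ?leq_b1 // big_ord1 coefC /=.
by [].
Qed.

Lemma opEsum (I : Type) (r : seq I) (P : pred I) (F : I -> {poly CC}) w :
  opE (\sum_(i <- r | P i) F i) w = \sum_(i <- r | P i) opE (F i) w.
Proof. exact: (big_morph (fun p => opE p w) (fun p q => opED p q w) (opE0 w)). Qed.

Lemma iterT_comm (A : W -> W) (AT : forall w, A (T w) = T (A w)) i (w : W) :
  iter i T (A w) = A (iter i T w).
Proof. by elim: i => //= i ->; rewrite AT. Qed.

Lemma opEX (p : {poly CC}) (w : W) : opE (p * 'X) w = T (opE p w).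
Proof.
have [->|p0] := eqVneq p 0; first by rewrite mul0r opE0 (T0 Tlin).
rewrite /opE size_mulX // big_ord_recl (coefMX p) /= scale0r add0r (Tsum Tlin).
by apply: eq_bigr => i _; rewrite (coefMX p) /= (TZ Tlin).
Qed.

Lemma opE_XsubC (c : CC) (q : {poly CC}) (w : W) : opE (('X - c%:P) * q) w = T (opE q w) - c *: opE q w.
Proof.
by rewrite mulrBl mulrC mul_polyC opED opEN opEX opEZ.
Qed.

Lemma opE_comm (A : W -> W) (Alin : forall (c : CC) x y, A (c *: x + y) = c *: A x + A y)
  (AT : forall w, A (T w) = T (A w)) (p : {poly CC}) (w : W) : opE p (A w) = A (opE p w).
Proof.
rewrite /opE (big_morph A (TD Alin) (T0 Alin)); apply: eq_bigr => i _.
by rewrite iterT_comm // (TZ Alin).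
Qed.

Lemma iterT_lin i : forall (c : CC) x y, iter i T (c *: x + y) = c *: iter i T x + iter i T y.
Proof. by elim: i => //= i IH c x y; rewrite IH Tlin. Qed.

Lemma opE_lin (p : {poly CC}) : forall (c : CC) x y, opE p (c *: x + y) = c *: opE p x + opE p y.
Proof.
move=> c x y; rewrite /opE scaler_sumr -big_split; apply: eq_bigr => i _.
by rewrite iterT_lin scalerDr !scalerA mulrC.
Qed.

End OpPoly.

Lemma noroot (W : lmodType CC) (T : W -> W)
  (Tlin : forall (c : CC) x y, T (c *: x + y) = c *: T x + T y)
  (w0 : W) (w0n : w0 != 0)
  (inj : forall c : CC, injective (fun w => T w - c *: w)) :
  forall p : {poly CC}, p != 0 -> opE T p w0 != 0.
Proof.
move=> p; have [n] := ubnP (size p); elim: n p => // n IH p hs pn0.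
case: (eqVneq (size p) 1) => [s1|s1].
  rewrite (size1_polyC (eq_leq s1)) opEC scaler_eq0 negb_or w0n andbT.
  apply: contra pn0 => /eqP h; apply/eqP.
  by rewrite (size1_polyC (eq_leq s1)) h.
have [x /factor_theorem [q pq]] := closed_rootP p s1.
have qn0 : q != 0 by apply: contra pn0 => /eqP q0; rewrite pq q0 mul0r.
rewrite pq mulrC (opE_XsubC Tlin); apply/negP => /eqP h.
have : opE T q w0 = 0.
  apply: (inj x); rewrite /= h (T0 Tlin) scaler0 subr0 //.
apply/eqP; apply: (IH q) => //.
move: hs; rewrite pq size_mul ?polyXsubC_eq0 // (size_XsubC x) addn2 /=.
by [].
Qed.

Lemma opE_lin0 (W : lmodType CC) (T : W -> W)
  (Tlin : forall (c : CC) x y, T (c *: x + y) = c *: T x + T y) (p : {poly CC}) :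
  forall (c : CC) x y, opE T p (c *: x + y) = c *: opE T p x + opE T p y.
Proof. exact: opE_lin. Qed.

Lemma schur_abstract (W : lmodType CC) (T : W -> W)
  (Tlin : forall (c : CC) x y, T (c *: x + y) = c *: T x + T y)
  (e : nat -> W)
  (hspan : forall v : W, exists (n : nat) (c : nat -> CC), v = \sum_(i < n) c i *: e i)
  (w0 : W) (w0n : w0 != 0)
  (hdich : forall c : CC, (forall w, T w = c *: w) \/ bijective (fun w => T w - c *: w)) :
  exists c : CC, forall w, T w = c *: w.
Proof.
apply: contrapT => Hn.
pose Tc (c : CC) (w : W) := T w - c *: w.
have hb : forall c, bijective (Tc c).
  by move=> c; case: (hdich c) => // h; exfalso; apply: Hn; exists c.
have : forall c, exists g, cancel (Tc c) g /\ cancel g (Tc c).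
  by move=> c; case: (hb c) => g h1 h2; exists g.
case/choice => R RK.
have Tclin : forall c (a : CC) x y, Tc c (a *: x + y) = a *: Tc c x + Tc c y.
  move=> c a x y; rewrite /Tc Tlin scalerDr !scalerA mulrC -!scalerA scalerBr.
  by rewrite addrACA opprD.
have Rlin : forall c (a : CC) x y, R c (a *: x + y) = a *: R c x + R c y.
  move=> c a x y.
  by rewrite -{1}[x]((RK c).2) -{1}[y]((RK c).2) -Tclin (RK c).1.
have TTc : forall c u, T (Tc c u) = Tc c (T u).
  by move=> c u; rewrite /Tc (TD Tlin) (TN Tlin) (TZ Tlin).
have RT : forall c w, R c (T w) = T (R c w).
  move=> c w; rewrite -{1}[w]((RK c).2) TTc.
  by rewrite (RK c).1.
have : forall c, exists n, exists coef : nat -> CC, R c w0 = \sum_(i < n) coef i *: e i.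
  by move=> c; apply: hspan.
case/choice => N HN.
have : forall c, exists coef : nat -> CC, R c w0 = \sum_(i < N c) coef i *: e i.
  by move=> c; apply: HN.
case/choice => coef Hcoef.
have [M [s [us Ms sM]]] := pigeon_CC N.
have hv : forall j : 'I_(size s), R (s`_j) w0 = \sum_(i < M) coef (s`_j) i *: e i.
  by move=> j; rewrite Hcoef sM // mem_nth.
have [l [[j0 lj0] lrel]] := @dep_rel _ W M (size s) e (fun j i => coef (s`_j) i)
  (fun j => R (s`_j) w0) Ms hv.
pose Q (j : 'I_(size s)) := \prod_(k < size s | k != j) ('X - (s`_k)%:P).
pose P := \prod_(k < size s) ('X - (s`_k)%:P).
have PQ : forall j : 'I_(size s), opE T P (R (s`_j) w0) = opE T (Q j) w0.
  move=> j; rewrite /P (bigD1 j) //= (opE_XsubC Tlin).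
  rewrite (opE_comm (Rlin _) (RT _)).
  exact: (RK _).2.
have lin := opE_lin0 Tlin P.
have : opE T P (\sum_j l j *: R (s`_j) w0) = opE T (\sum_j l j *: Q j) w0.
  rewrite (Tsum lin) (opEsum T); apply: eq_bigr => j _.
  by rewrite (TZ lin) (opEZ T) PQ.
rewrite lrel (T0 lin) => /esym /eqP.
apply/negP; apply: (noroot Tlin w0n).
  by move=> c x y /=; apply: (can_inj (RK c).1).
apply/eqP => /(congr1 (fun p => p.[s`_j0])); rewrite horner0.
rewrite horner_sum (bigD1 j0) //= big1 ?addr0.
  rewrite hornerZ horner_prod; apply/eqP; rewrite mulf_eq0 negb_or lj0 /=.
  apply/prodf_neq0 => k kj0; rewrite hornerXsubC subr_eq0.
  by rewrite nth_uniq // eq_sym.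
move=> j jj0; rewrite hornerZ /Q (bigD1 j0) /=; last by rewrite eq_sym.
by rewrite hornerM hornerXsubC subrr mul0r mulr0.
Qed.

Lemma malgUZ (r : nat) (V : lmodType CC) (c : CC) (x : V) (k : 'rV[int]_r) :
  (<< (c *: x) *g k >> : tensL 'rV[int]_r V) = c *: (<< x *g k >> : tensL 'rV[int]_r V).
Proof.
apply/malgP => k'; rewrite tscaleE !mcoeffU.
by case: (k == k'); rewrite ?scaler0.
Qed.

Lemma if_false (X : Type) (b : bool) (x y : X) : ~~ b -> (if b then x else y) = y.
Proof. by case: b. Qed.
Lemma if_true (X : Type) (b : bool) (x y : X) : b -> (if b then x else y) = x.
Proof. by case: b. Qed.

Lemma sum_single (W : lmodType CC) (K : nat) (F : 'I_K -> W) (i0 : 'I_K) :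
  (forall i, i != i0 -> F i = 0) -> \sum_i F i = F i0.
Proof. by move=> h; rewrite (bigD1 i0) //= big1 ?addr0 // => i /h. Qed.

Lemma binz0S (i : nat) : binz CC 0 i.+1 = 0.
Proof. by rewrite /binz big_ord_recl /= subrr mul0r mul0r. Qed.

Lemma binz_0 (m : int) : binz CC m 0 = 1.
Proof. by rewrite /binz big_ord0 fact0 divr1. Qed.

Lemma binzN2_neq0 (i : nat) : binz CC (-2) i != 0.
Proof.
rewrite /binz mulf_neq0 //; last by rewrite invr_eq0 pnatr_eq0 -lt0n fact_gt0.
apply/prodf_neq0 => j _; rewrite intr_eq0; apply/eqP; lia.
Qed.

Lemma hom_monoz (r : nat) (phi : 'rV[int]_r -> CC)
  (phiD : forall x y, phi (x + y) = phi x * phi y) (phi0 : phi 0 = 1) (m : 'rV[int]_r) :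
  phi m = monoz (\row_i phi (delta_mx 0 i)) m.
Proof.
have phiMn : forall x n, phi (x *+ n) = phi x ^+ n.
  move=> x; elim=> [|n IH]; first by rewrite mulr0n expr0.
  by rewrite mulrS phiD IH exprS.
have phiN : forall x, phi (- x) = (phi x)^-1.
  move=> x; have h : phi x * phi (- x) = 1 by rewrite -phiD addrN.
  have hx : phi x != 0 by apply/eqP => h0; move: h; rewrite h0 mul0r => /eqP; rewrite eq_sym oner_eq0.
  by rewrite -[LHS]mul1r -(mulVf hx) -mulrA h mulr1.
have phiZ : forall x (z : int), phi (x *~ z) = phi x ^ z.
  move=> x [n|n]; first by rewrite /= phiMn.
  by rewrite NegzE mulrNz phiN -invr_expz -pmulrn phiMn.
rewrite /monoz {1}[m]matrix_sum_delta big_ord1.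
rewrite (big_morph phi phiD phi0); apply: eq_bigr => i _.
rewrite mxE -phiZ; congr phi.
apply/matrixP => a b; rewrite !mxE -scaler_int !mxE intz mulrC.
by [].
Qed.

Section Main.
Variables (V : lmodType CC) (Y : V -> int -> V -> V) (vac : V) (r : nat).
Let A : VAdata CC := {| va_space := V; va_mode := Y; va_vac := vac |}.
Hypothesis hVA : is_vertex_algebra A.
Variable W : lmodType CC.
Variable YW : va_space (LrV r A) -> int -> W -> W.
Hypothesis hW : is_irreducible YW.

Local Notation L := (tensL 'rV[int]_r V).

Lemma Ylin1 n w : forall (c : CC) (x y : V), Y (c *: x + y) n w = c *: Y x n w + Y y n w.
Proof. by case: hVA => -[h1 _ _ _ _] _ c x y; apply: h1. Qed.
Lemma Ylin2 u n : forall (c : CC) (x y : V), Y u n (c *: x + y) = c *: Y u n x + Y u n y.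
Proof. by case: hVA => -[_ h2 _ _ _] _ c x y; apply: h2. Qed.
Lemma Yvac n w : Y vac n w = if n == -1 then w else 0.
Proof. by case: hVA => -[_ _ _ h4 _] _; apply: h4. Qed.

Lemma YWlin1 n w : forall (c : CC) (x y : L), YW (c *: x + y) n w = c *: YW x n w + YW y n w.
Proof. by case: hW => -[h1 _ _ _ _] _ c x y; apply: h1. Qed.
Lemma YWlin2 f n : forall (c : CC) (x y : W), YW f n (c *: x + y) = c *: YW f n x + YW f n y.
Proof. by case: hW => -[_ h2 _ _ _] _ c x y; apply: h2. Qed.
Lemma YWvac n w : YW << vac *g 0 >> n w = if n == -1 then w else 0.
Proof. by case: hW => -[_ _ _ h4 _] _; apply: h4. Qed.
Lemma YWtrunc (u : L) w : exists N : int, forall n, N <= n -> YW u n w = 0.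
Proof. by case: hW => -[_ _ h3 _ _] _; apply: h3. Qed.
Lemma YWborch (u v : L) (w : W) (m n l : int) : exists N : nat, forall K : nat, (N <= K)%N ->
         \sum_(i < K) binz CC m i *: YW (Lr_mode (A := A) u (l + (i : nat)%:Z) v)
                                    (m + n - (i : nat)%:Z) w
         = \sum_(i < K) ((-1) ^+ i * binz CC l i) *:
              (YW u (m + l - (i : nat)%:Z) (YW v (n + (i : nat)%:Z) w)
               - ((-1) ^ l) *: YW v (n + l - (i : nat)%:Z) (YW u (m + (i : nat)%:Z) w)).
Proof. by case: hW => -[_ _ _ _ h5] _; apply: h5. Qed.

Lemma LrUU (u v : V) (m k : 'rV[int]_r) (n : int) :
  Lr_mode (A := A) (<< u *g m >> : L) n << v *g k >> = << Y u n v *g (m + k) >>.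
Proof.
rewrite /Lr_mode msuppU; case: eqP => [->|_].
  by rewrite big_nil (T0 (Ylin1 n v)) monalgU0.
rewrite big_seq_fset1 mcoeffUU msuppU; case: eqP => [->|_].
  by rewrite big_nil (T0 (Ylin2 u n)) monalgU0.
by rewrite big_seq_fset1 mcoeffUU.
Qed.

Let e (m : 'rV[int]_r) : L := << vac *g m >>.

Lemma YvacF n w : n != -1 -> Y vac n w = 0.
Proof. by move=> h; rewrite Yvac (negbTE h). Qed.
Lemma YvacT w : Y vac (-1) w = w.
Proof. by rewrite Yvac eqxx. Qed.
Lemma YWvacF n w : n != -1 -> YW (e 0) n w = 0.
Proof. by move=> h; rewrite /e YWvac (negbTE h). Qed.
Lemma YWvacT w : YW (e 0) (-1) w = w.
Proof. by rewrite /e YWvac eqxx. Qed.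
Let T (m : 'rV[int]_r) : W -> W := YW (e m) (-1).

Lemma YW0 n w : YW 0 n w = 0.
Proof. exact: (T0 (YWlin1 n w)). Qed.
Lemma YW_0 f n : YW f n 0 = 0.
Proof. exact: (T0 (YWlin2 f n)). Qed.

Lemma emode0 (m : 'rV[int]_r) (j : int) (w : W) : j != -1 -> YW (e m) j w = 0.
Proof.
move=> hj.
have [N HN] := YWborch (e m) (e 0) w 0 (j + 1) (-2).
have key : forall K : nat, (N <= K)%N -> \sum_(i < K) ((-1) ^+ i * binz CC (-2) i) *:
   (YW (e m) (0 + -2 - (i : nat)%:Z) (YW (e 0) (j + 1 + (i : nat)%:Z) w)
    - ((-1) ^ (-2)) *: YW (e 0) (j + 1 + -2 - (i : nat)%:Z) (YW (e m) (0 + (i : nat)%:Z) w)) = 0.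
  move=> K hK; rewrite -(HN K hK); apply: big1 => -[[|i] hi] _ /=.
    rewrite binz_0 scale1r /e LrUU YvacF; last by apply/eqP; lia.
    by rewrite monalgU0 YW0.
  by rewrite binz0S scale0r.
have cn0 : forall i : nat, (-1) ^+ i * binz CC (-2) i != 0.
  by move=> i; rewrite mulf_neq0 ?signr_eq0 ?binzN2_neq0.
case: (ltgtP j (-1)) => [jlt|jgt|jeq]; last by rewrite jeq eqxx in hj.
- pose i0 := `|(j + 2)%R|%N.
  have hK : (N <= (N + i0).+1)%N by rewrite -addnS leq_addr.
  have hi0 : (i0 < (N + i0).+1)%N by rewrite ltnS leq_addl.
  have := key _ hK; rewrite (@sum_single _ _ _ (Ordinal hi0)) /=.
    rewrite (_ : j + 1 + i0%:Z = -1); last by lia.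
    rewrite YWvacT (@YWvacF (j + 1 + -2 - i0%:Z)); last by apply/eqP; lia.
    rewrite scaler0 subr0 (_ : 0 + -2 - i0%:Z = j); last by lia.
    by move/eqP; rewrite scaler_eq0 (negbTE (cn0 _)) /= => /eqP.
  move=> i hi; have hi' : (i : nat) <> i0 by move=> h; move/eqP: hi; apply; apply: val_inj.
  rewrite (@YWvacF (j + 1 + i%:Z)); last by apply/eqP; lia.
  rewrite (@YWvacF (j + 1 + -2 - i%:Z)); last by apply/eqP; lia.
  by rewrite !YW_0 scaler0 subr0 scaler0.
- pose i0 := `|j|%N.
  have hK : (N <= (N + i0).+1)%N by rewrite -addnS leq_addr.
  have hi0 : (i0 < (N + i0).+1)%N by rewrite ltnS leq_addl.
  have := key _ hK; rewrite (@sum_single _ _ _ (Ordinal hi0)) /=.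
    rewrite (_ : j + 1 + -2 - i0%:Z = -1); last by lia.
    rewrite YWvacT (@YWvacF (j + 1 + i0%:Z)); last by apply/eqP; lia.
    rewrite YW_0 sub0r (_ : 0 + i0%:Z = j); last by lia.
    move/eqP; rewrite scaler_eq0 (negbTE (cn0 _)) /= oppr_eq0 scaler_eq0.
    have h1 : ((-1 : CC) == 0) = false by rewrite oppr_eq0 oner_eq0.
    by rewrite expfz_eq0 h1 andbF /= => /eqP.
  move=> i hi; have hi' : (i : nat) <> i0 by move=> h; move/eqP: hi; apply; apply: val_inj.
  rewrite (@YWvacF (j + 1 + i%:Z)); last by apply/eqP; lia.
  rewrite (@YWvacF (j + 1 + -2 - i%:Z)); last by apply/eqP; lia.
  by rewrite !YW_0 scaler0 subr0 scaler0.
Qed.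

Lemma Lr_modeU (u : V) (m : 'rV[int]_r) (n : int) (g : L) :
  Lr_mode (A := A) (<< u *g m >> : L) n g = \sum_(k' <- msupp g) << Y u n g@_k' *g (m + k') >>.
Proof.
rewrite /Lr_mode msuppU; case: eqP => [->|_].
  by rewrite big_nil big1 // => k' _; rewrite (T0 (Ylin1 n _)) monalgU0.
by rewrite big_seq_fset1 mcoeffUU.
Qed.

Lemma e_pos (m : 'rV[int]_r) (k : int) (g : L) : k != -1 -> Lr_mode (A := A) (e m) k g = 0.
Proof.
move=> hk; rewrite /e Lr_modeU big1 // => k' _.
by rewrite YvacF // monalgU0.
Qed.

Lemma T_comm (m : 'rV[int]_r) (f : L) (n : int) (w : W) :
  T m (YW f n w) = YW f n (T m w).
Proof.
have [N HN] := YWborch (e m) f w (-1) n 0.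
have := HN N.+1 (leqnSn N).
rewrite big1; last first.
  move=> i _; rewrite e_pos ?YW0 ?scaler0 //; apply/eqP; lia.
rewrite (@sum_single _ _ _ ord0); last first.
  by move=> [[|i] hi] // _; rewrite binz0S mulr0 scale0r.
rewrite /= binz_0 mulr1 expr0 scale1r.
rewrite ?addr0 ?subr0.
rewrite expr0z scale1r /T => /eqP; rewrite eq_sym subr_eq0 => /eqP.
by [].
Qed.

Lemma T_assoc (m : 'rV[int]_r) (f : L) (n : int) (w : W) :
  YW (Lr_mode (A := A) (e m) (-1) f) n w = T m (YW f n w).
Proof.
have [N HN] := YWborch (e m) f w 0 n (-1).
have := HN N.+1 (leqnSn N).
rewrite (@sum_single _ _ _ ord0); last first.
  by move=> [[|i] hi] // _; rewrite binz0S scale0r.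
rewrite [RHS](@sum_single _ _ _ ord0); last first.
  move=> [[|i] hi] // _ /=.
  rewrite (@emode0 m (0 + -1 - i.+1%:Z)); last by apply/eqP; lia.
  rewrite (@emode0 m (0 + i.+1%:Z)); last by apply/eqP; lia.
  by rewrite YW_0 scaler0 subr0 scaler0.
rewrite /= !binz_0 ?mulr1 expr0 ?mul1r !scale1r ?addr0 ?subr0 ?add0r.
rewrite (@emode0 m 0) ?YW_0 ?scaler0 ?subr0 //.
Qed.

Lemma irrW (S : W -> Prop) : is_submodule YW S -> (forall w, S w -> w = 0) \/ (forall w, S w).
Proof. by case: hW => _ [_]; apply. Qed.

Lemma exW : exists w0 : W, w0 != 0.
Proof. by case: hW => _ [[w hw] _]; exists w; apply/eqP. Qed.

Lemma dich (B : W -> W) (Blin : forall (c : CC) x y, B (c *: x + y) = c *: B x + B y)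
  (Bc : forall f n w, B (YW f n w) = YW f n (B w)) (c : CC) :
  (forall w, B w = c *: w) \/ bijective (fun w => B w - c *: w).
Proof.
pose D w := B w - c *: w.
have Dlin : forall (a : CC) x y, D (a *: x + y) = a *: D x + D y.
  move=> a x y; rewrite /D Blin scalerDr !scalerA mulrC -!scalerA scalerBr.
  by rewrite addrACA opprD.
have Dc : forall f n w, D (YW f n w) = YW f n (D w).
  move=> f n w; rewrite /D Bc (TD (YWlin2 f n)) (TN (YWlin2 f n)) (TZ (YWlin2 f n)).
  by [].
have [w0 w0n] := exW.
have subK : is_submodule YW (fun w => D w = 0).
  split; first exact: (T0 Dlin).
    by move=> a x y hx hy; rewrite Dlin hx hy scaler0 addr0.
  by move=> f n w hw; rewrite Dc hw YW_0.
case: (irrW subK) => [hk|hall]; last first.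
  by left => w; have /eqP := hall w; rewrite subr_eq0 => /eqP.
right.
have subI : is_submodule YW (fun w => exists x, w = D x).
  split; first by exists 0; rewrite (T0 Dlin).
    by move=> a _ _ [x ->] [y ->]; exists (a *: x + y); rewrite Dlin.
  by move=> f n _ [x ->]; exists (YW f n x); rewrite Dc.
case: (irrW subI) => [him|hall].
  exfalso; move/negP: w0n; apply; apply/eqP; apply: hk.
  by apply: him; exists w0.
have : forall w, exists x, w = D x by [].
case/choice => g hg.
exists g => x; last by rewrite [RHS]hg.
apply/eqP; rewrite -subr_eq0; apply/eqP; apply: hk.
have -> : g (D x) - x = 1 *: g (D x) + (-1) *: x by rewrite scale1r scaleN1r.
by rewrite Dlin -(hg (D x)) scale1r scaleN1r (TN Dlin) addrN.
Qed.

Lemma spanW (eV : nat -> V)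
  (hV : forall v, exists (n : nat) (c : nat -> CC), v = \sum_(i < n) c i *: eV i) :
  exists eW : nat -> W, forall w, exists (n : nat) (c : nat -> CC), w = \sum_(i < n) c i *: eW i.
Proof.
have [w0 w0n] := exW.
pose J := (nat * 'rV[int]_r * int)%type.
pose act (s : seq J) : W := foldr (fun j acc => YW (<< eV j.1.1 *g j.1.2 >> : L) j.2 acc) w0 s.
pose eW (i : nat) : W := if (choice.unpickle i : option (seq J)) is Some s then act s else 0.
exists eW.
pose Sp w := exists (n : nat) (c : nat -> CC), w = \sum_(i < n) c i *: eW i.
have widen : forall n1 n (c1 : nat -> CC), (n1 <= n)%N ->
    \sum_(i < n1) c1 i *: eW i = \sum_(i < n) (if (i < n1)%N then c1 i else 0) *: eW i.
  move=> n1 n c1 h; rewrite (big_ord_widen _ (fun i => c1 i *: eW i) h).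
  rewrite [RHS](bigID (fun i : 'I_n => (i < n1)%N)) /= [X in _ = _ + X]big1 ?addr0.
    by apply: eq_bigr => i ->.
  by move=> i /negbTE ->; rewrite scale0r.
have SpD : forall (a : CC) x y, Sp x -> Sp y -> Sp (a *: x + y).
  move=> a _ _ [n1 [c1 ->]] [n2 [c2 ->]].
  exists (maxn n1 n2), (fun i => a * (if (i < n1)%N then c1 i else 0) + (if (i < n2)%N then c2 i else 0)).
  rewrite (widen n1 (maxn n1 n2)) ?leq_maxl // (widen n2 (maxn n1 n2)) ?leq_maxr //.
  by rewrite scaler_sumr -big_split; apply: eq_bigr => i _; rewrite scalerA scalerDl.
have Sp0 : Sp 0 by exists 0%N, (fun _ => 0); rewrite big_ord0.
have Sp_e : forall i, Sp (eW i).
  move=> i; exists i.+1, (fun t => (t == i)%:R).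
  rewrite big_ord_recr /= eqxx scale1r big1 ?add0r // => t _.
  by rewrite (ltn_eqF (ltn_ord t)) scale0r.
have SpZ : forall (a : CC) x, Sp x -> Sp (a *: x).
  by move=> a x hx; have := SpD a x 0 hx Sp0; rewrite addr0.
have Sp_sum : forall (I : Type) (rr : seq I) (P : pred I) (F : I -> W),
    (forall i, Sp (F i)) -> Sp (\sum_(i <- rr | P i) F i).
  move=> I rr P F hF; apply: big_ind => //.
  by move=> x y hx hy; have := SpD 1 x y hx hy; rewrite scale1r.
have mlin : forall k, forall (c : CC) (x y : V),
    (<< (c *: x + y) *g k >> : L) = c *: (<< x *g k >> : L) + << y *g k >>.
  by move=> k c x y; rewrite monalgUD malgUZ.
have subS : is_submodule YW Sp.
  split; [exact: Sp0 | exact: SpD | ].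
  move=> f n _ [N [c ->]].
  rewrite (Tsum (YWlin2 f n)); apply: (Sp_sum) => i.
  rewrite (TZ (YWlin2 f n)); apply: (SpZ).
  rewrite /eW; case: (choice.unpickle i) => [s|]; last by rewrite YW_0.
  rewrite [f]monalgE (Tsum (YWlin1 n _)); apply: (Sp_sum) => k.
  case: (hV f@_k) => nv [cv ->].
  rewrite (Tsum (mlin k)) (Tsum (YWlin1 n _)); apply: (Sp_sum) => t.
  rewrite (TZ (mlin k)) (TZ (YWlin1 n _)); apply: (SpZ).
  have := Sp_e (choice.pickle (((t : nat), k, n) :: s) : nat).
  by rewrite /eW choice.pickleK.
have : Sp w0.
  by have := Sp_e (choice.pickle ([::] : seq J)); rewrite /eW choice.pickleK.
move=> Sw0; case: (irrW subS) => [h0|hall]; last exact: hall.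
by move/negP: w0n; case; apply/eqP; apply: h0.
Qed.

Lemma T_add (m k : 'rV[int]_r) w : T (m + k) w = T m (T k w).
Proof. by rewrite -T_assoc /e LrUU YvacT. Qed.

Lemma T_zero w : T 0 w = w.
Proof. exact: YWvacT. Qed.

Lemma shiftU (v : V) (k : 'rV[int]_r) n w : YW << v *g k >> n w = T k (YW << v *g 0 >> n w).
Proof. by rewrite -T_assoc /e LrUU YvacT addr0. Qed.

Lemma main_sec (hcount : countable_dim V) :
  exists (U : lmodType CC) (YU : V -> int -> U -> U) (a : 'rV[CC]_r),
    [/\ is_irreducible (A := A) YU, (forall i, a 0 i != 0) &
        module_iso YW (Ua_mode (A := A) YU a)].
Proof.
have [eV hV] := hcount.
have [eW heW] := spanW hV.
have [w0 w0n] := exW.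
have : forall m, exists c : CC, forall w, T m w = c *: w.
  move=> m; apply: (schur_abstract (YWlin2 (e m) (-1)) heW w0n).
  exact: (dich (YWlin2 (e m) (-1)) (T_comm m)).
case/choice => cm hc.
have cmD : forall x y, cm (x + y) = cm x * cm y.
  move=> x y; apply/eqP; rewrite -subr_eq0; apply/eqP.
  have : (cm (x + y) - cm x * cm y) *: w0 = 0.
    by rewrite scalerBl -hc T_add !hc scalerA subrr.
  by move/eqP; rewrite scaler_eq0 (negbTE w0n) orbF => /eqP.
have cm0 : cm 0 = 1.
  apply/eqP; rewrite -subr_eq0; apply/eqP.
  have : (cm 0 - 1) *: w0 = 0 by rewrite scalerBl -hc T_zero scale1r subrr.
  by move/eqP; rewrite scaler_eq0 (negbTE w0n) orbF => /eqP.
pose a := \row_i cm (delta_mx 0 i).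
have ha : forall m, cm m = monoz a m by move=> m; apply: hom_monoz.
pose YU (v : V) (n : int) (w : W) := YW << v *g 0 >> n w.
have mlin : forall k, forall (c : CC) (x y : V),
    (<< (c *: x + y) *g k >> : L) = c *: (<< x *g k >> : L) + << y *g k >>.
  by move=> k c x y; rewrite monalgUD malgUZ.
have key : forall f n w, YW f n w = Ua_mode (A := A) YU a f n w.
  move=> f n w; rewrite /Ua_mode {1}[f]monalgE (Tsum (YWlin1 n w)).
  by apply: eq_bigr => k _; rewrite shiftU hc ha.
exists W, YU, a; split.
- split; last split.
  + split.
    * by move=> c u v n w; rewrite /YU /= mlin YWlin1.
    * by move=> u n c x y; apply: YWlin2.
    * by move=> u w; apply: YWtrunc.
    * by move=> n w; apply: YWvac.
    * move=> u v w m n l; have [N HN] := YWborch << u *g 0 >> << v *g 0 >> w m n l.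
      exists N => K hK; rewrite -HN //; apply: eq_bigr => i _.
      by rewrite LrUU addr0.
  + by exists w0; apply/eqP.
  + move=> S [S0 SD SY]; apply: irrW; split => // f n w Sw.
    rewrite key /Ua_mode; apply: big_ind => //.
      by move=> x y hx hy; have := SD 1 x y hx hy; rewrite scale1r.
    move=> k _; have := SD (monoz a k) _ 0 (SY f@_k n w Sw) S0.
    by rewrite addr0.
- move=> i; rewrite mxE; apply/eqP => h0.
  have := cmD (delta_mx 0 i) (- delta_mx 0 i).
  by rewrite addrN cm0 h0 mul0r => /eqP; rewrite oner_eq0.
- exists id; split => //; first by exists id.
Qed.

End Main.

Theorem proposition3p12
  (V : lmodType CC) (Y : V -> int -> V -> V) (vac : V) (r : nat)
  (hVA : is_vertex_algebra {| va_space := V; va_mode := Y; va_vac := vac |})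
  (hcount : countable_dim V)
  (W : lmodType CC)
  (YW : va_space (LrV r {| va_space := V; va_mode := Y; va_vac := vac |}) ->
        int -> W -> W)
  (hW : is_irreducible YW) :
  exists (U : lmodType CC) (YU : V -> int -> U -> U) (a : 'rV[CC]_r),
    [/\ is_irreducible (A := {| va_space := V; va_mode := Y; va_vac := vac |}) YU,
        (forall i, a 0 i != 0) &
        module_iso YW
          (Ua_mode (A := {| va_space := V; va_mode := Y; va_vac := vac |}) YU a)].
Proof. exact: (main_sec hVA hW hcount). Qed.
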